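(* An oriented tape graph $G$ is (isomorphic as a tape graph to) the positive spine $G_Q^+$ of some quadrangulation $Q$ of some occupied surface if and only if every boundary component of the thickening of $G$ contains a vertex of $G$ together with its two adjacent barrier half-sides (i.e. contains a breakpoint).
   Context: Tape graphs. - A tape graph is a finite graph together with, for each vertex $v$, a total ordering of the half-edges incident to $v$; a loop contributes two half-edges at its vertex. - The first and last half-edges at $v$ are the barrier half-edges. - An oriented tape graph is thickened to an oriented surface with boundary: each vertex becomes a disc, each edge an untwisted band, and at each vertex $v$ the bands of the half-edges $h_1<\dots<h_d$ are attached in anticlockwise order along an arc of the boundary of the vertex disc. - Each half-edge $h$ has two half-sides $h_-<h_+$ (the sides of its band near $v$), giving the order $h_{1-}<h_{1+}<\dots<h_{d-}<h_{d+}$ at $v$. Orientedness means that for an edge with half-edges $h,h'$, its two sides are $h_-\cup h'_+$ and $h'_-\cup h_+$. - The barrier half-sides at $v$ are $h_{1-}$ and $h_{d+}$; they are joined along the boundary of the thickening through the vertex at $v$. - A boundary component of the thickening passes through vertices $v_i$ between consecutive sides $s_{i-1},s_i$. The vertex $v_i$ is a breakpoint if $s_{i-1}$ is the maximal and $s_i$ the minimal side at $v_i$; that is, the boundary component passes from $h_{d+}$ to $h_{1-}$ at $v_i$. Occupied surfaces and spines. - An occupied surface $(\Sigma,V)$ is a compact oriented surface with a finite set $V\subset\partial\Sigma$ of $\pm$-signed vertices. It is required that every component has nonempty boundary, every boundary component contains vertices, and signs alternate along each boundary component. - A quadrangulation $Q$ is a set of disjoint properly embedded arcs joining vertices of opposite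 sign, cutting $\Sigma$ into squares (discs with four alternating vertices). - The positive spine $G_Q^+$ is the embedded graph with vertex set $V_+$ and, for each square, an edge given by the diagonal joining its positive vertices. - $G_Q^+$ is a tape graph: at each $v\in V_+\subset\partial\Sigma$, the incident half-edges are totally ordered anticlockwise, via the orientation of the closed interval of inward unit tangent directions at $v$. *)

(* Defs.v *)
From mathcomp Require Import all_boot.
Set Implicit Arguments. Unset Strict Implicit. Unset Printing Implicit Defensive.

(* Tape graphs.  Half-edges tH, vertex map tvert, edge pairing tmate  *)
(* (fixed-point-free involution; a loop = two half-edges at the same  *)
(* vertex), and at each vertex a total order of the incident          *)
(* half-edges given by a position tpos : the half-edges at v get the   *)
(* positions 0, ..., deg v - 1 bijectively (h_1 < ... < h_d).          *)

Record tape_graph := TapeGraph {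
  tV : finType;
  tH : finType;
  tvert : tH -> tV;
  tmate : tH -> tH;
  tmate_invol : forall h, tmate (tmate h) = h;
  tmate_fpf : forall h, tmate h != h;
  tpos : tH -> nat;
  tpos_inj : forall h h', tvert h = tvert h' -> tpos h = tpos h' -> h = h';
  tpos_range : forall h, tpos h < #|[pred h' | tvert h' == tvert h]|
}.

Definition tdeg (G : tape_graph) (v : tV G) : nat :=
  #|[pred h : tH G | tvert h == v]|.

Definition tsucc (G : tape_graph) (h : tH G) : tH G :=
  odflt h [pick h' | (tvert h' == tvert h) &&
                     (tpos h' == (tpos h).+1 %% tdeg (tvert h))].

(* Boundary walk of the oriented thickening.  Each side of the
   thickening is h'_- U h_+ with h' = tmate h; we record it by the
   half-side h_+ (i.e. by h).  Arriving at vertex v along h_+, the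
   boundary runs along the vertex disc to succ(h)_- and leaves along
   the side succ(h)_- U (tmate (succ h))_+ .  Hence the boundary
   components containing sides are the orbits of [bwalk]. *)
Definition bwalk (G : tape_graph) (h : tH G) : tH G := tmate (tsucc h).

(* A transition at v from h_+ to succ(h)_- is a breakpoint iff h is the
   maximal half-edge at v (then it goes from h_{d+} to h_{1-}). *)
Definition is_max_at_vertex (G : tape_graph) (h : tH G) : bool :=
  (tpos h).+1 == tdeg (tvert h).

(* Boundary components of the thickening are (a) the bwalk-orbits and
   (b) the boundary circles of discs of isolated vertices, which have no
   half-sides, hence no breakpoint. *)
Definition every_boundary_has_breakpoint (G : tape_graph) : Prop :=
  (forall v : tV G, exists h : tH G, tvert h = v) /\
  (forall h : tH G, exists h' : tH G, fconnect (@bwalk G) h h' && is_max_at_vertex h').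

(* Occupied surfaces with a quadrangulation, as gluings of squares.   *)
(* Each square s has corners 0,1,2,3 in anticlockwise order (w.r.t.   *)
(* the orientation of Sigma); corners 0,2 are positive, 1,3 negative. *)
(* Side k of s runs from corner k to corner k+1 (mod 4).  The          *)
(* involution qglue on sides pairs the two sides of each arc of Q;     *)
(* its fixed points are the boundary segments of Sigma.  Gluing is     *)
(* orientation reversing and sign preserving: side k of s glued to     *)
(* side j of s' identifies corner k with corner j+1 and corner k+1     *)
(* with corner j, so k and j have opposite parity.                     *)

Definition prev4 (k : 'I_4) : 'I_4 := inord ((k + 3) %% 4).
Definition opp4 (k : 'I_4) : 'I_4 := inord ((k + 2) %% 4).

Definition side_before (S : finType) (c : S * 'I_4) : S * 'I_4 :=
  (c.1, prev4 c.2).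

(* corner adjacency: corner (s,k) is identified with corner (s',j) where
   (s',j) = qglue (s,k-1) (across an arc).  Following this relation
   turns anticlockwise around the vertex. *)
Definition crel (S : finType) (gl : S * 'I_4 -> S * 'I_4) : rel (S * 'I_4) :=
  fun c c' => (gl (side_before c) != side_before c) && (c' == gl (side_before c)).

Record quad_surface := QuadSurface {
  qSq : finType;
  qglue : qSq * 'I_4 -> qSq * 'I_4;
  qglue_invol : forall x, qglue (qglue x) = x;
  qglue_parity : forall x, qglue x != x -> odd (qglue x).2 = ~~ odd x.2;
  (* every vertex lies on the boundary of Sigma (V is a subset of dSigma):
     going anticlockwise around any corner one reaches a boundary segment *)
  qvertex_boundary : forall c : qSq * 'I_4, exists c' : qSq * 'I_4,
      connect (crel qglue) c c' && (qglue (side_before c') == side_before c')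
}.

Definition same_vertex (X : quad_surface) (c c' : qSq X * 'I_4) : bool :=
  connect (crel (@qglue X)) c c' || connect (crel (@qglue X)) c' c.

Definition ccw_before (X : quad_surface) (c c' : qSq X * 'I_4) : bool :=
  (c != c') && connect (crel (@qglue X)) c c'.

(* G is isomorphic (as a tape graph) to the positive spine G_Q^+ of X:
   half-edges of G_Q^+ are the positive corners of squares (two per
   square, joined by the positive diagonal), vertices are the positive
   vertices of Sigma, ordered anticlockwise. *)
Definition spine_iso (G : tape_graph) (X : quad_surface) : Prop :=
  exists f : tH G -> qSq X * 'I_4,
    [/\ injective f,
        forall h, ~~ odd (f h).2,
        forall c : qSq X * 'I_4, ~~ odd c.2 -> exists h, f h = c &
        forall h, f (tmate h) = ((f h).1, opp4 (f h).2)] /\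
    [/\ forall v : tV G, exists h, tvert h = v,
        forall h h', tvert h = tvert h' <-> same_vertex (f h) (f h') &
        forall h h', tvert h = tvert h' -> (tpos h < tpos h' <-> ccw_before (f h) (f h'))].

Definition is_positive_spine (G : tape_graph) : Prop :=
  exists X : quad_surface, spine_iso G X.

(* Main.v *)
Require Import Defs.
From mathcomp Require Import all_boot zify.
Set Implicit Arguments. Unset Strict Implicit. Unset Printing Implicit Defensive.

Lemma tpos_surj (G : tape_graph) (v : tV G) i : i < tdeg v -> exists h : tH G, tvert h = v /\ tpos h = i.
Proof.
move=> hi.
set P := [pred h : tH G | tvert h == v].
have sz : size (map (@tpos G) (enum P)) = tdeg v by rewrite size_map -cardE.
have u : uniq (map (@tpos G) (enum P)).
  rewrite map_inj_in_uniq ?enum_uniq // => x y; rewrite !mem_enum !inE => /eqP hx /eqP hy.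
  by apply: tpos_inj; rewrite hx hy.
have sub : {subset map (@tpos G) (enum P) <= iota 0 (tdeg v)}.
  move=> x /mapP [h]; rewrite mem_enum inE => /eqP <- ->.
  by rewrite mem_iota /= add0n; apply: tpos_range.
have [_ eqs] := uniq_min_size u sub (eq_leq (etrans (size_iota _ _) (esym sz))).
have : i \in iota 0 (tdeg v) by rewrite mem_iota add0n hi.
rewrite -eqs => /mapP [h]; rewrite mem_enum inE => /eqP hv ->.
by exists h.
Qed.

Lemma tsuccP (G : tape_graph) (h : tH G) :
  tvert (tsucc h) = tvert h /\ tpos (tsucc h) = (tpos h).+1 %% tdeg (tvert h).
Proof.
rewrite /tsucc; case: pickP => [h' /andP [/eqP -> /eqP ->] //|none].
have d0 : 0 < tdeg (tvert h) by have := tpos_range h; rewrite /tdeg; lia.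
have [h' [e1 e2]] := tpos_surj (ltn_pmod (tpos h).+1 d0).
by have := none h'; rewrite e1 e2 !eqxx.
Qed.

Definition next4 (k : 'I_4) : 'I_4 := inord ((k + 1) %% 4).

Lemma odd_prev4 k : odd (prev4 k) = ~~ odd k.
Proof. by case: k => [[|[|[|[|k]]]] //= ?]; rewrite /prev4 inordK. Qed.
Lemma odd_next4 k : odd (next4 k) = ~~ odd k.
Proof. by case: k => [[|[|[|[|k]]]] //= ?]; rewrite /next4 inordK. Qed.
Lemma prev4_next4 k : prev4 (next4 k) = k.
Proof. by apply: val_inj; case: k => [[|[|[|[|k]]]] //= ?]; rewrite /prev4 /next4 !inordK. Qed.
Lemma prev4_prev4 k : prev4 (prev4 k) = opp4 k.
Proof. by apply: val_inj; case: k => [[|[|[|[|k]]]] //= ?]; rewrite /prev4 /opp4 !inordK. Qed.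

Lemma tpos_lt (G : tape_graph) (h : tH G) : tpos h < tdeg (tvert h).
Proof. exact: tpos_range. Qed.

Lemma succ_nmax (G : tape_graph) (h : tH G) : ~~ is_max_at_vertex h ->
  tvert (tsucc h) = tvert h /\ tpos (tsucc h) = (tpos h).+1.
Proof.
rewrite /is_max_at_vertex => nm; have [e1 e2] := tsuccP h; split => //.
by rewrite e2 modn_small //; have := tpos_lt h; lia.
Qed.

Lemma tsucc_inj (G : tape_graph) : injective (@tsucc G).
Proof.
move=> h h' e; have [e1 e2] := tsuccP h; have [e1' e2'] := tsuccP h'.
have ev : tvert h = tvert h' by rewrite -e1 -e1' e.
apply: tpos_inj => //.
have l := tpos_lt h; have l' := tpos_lt h'; rewrite -ev in l'.
move: e2 e2'; rewrite e -ev => -> ev2.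
move: ev2; set d := tdeg _ in l l' *.
have [hm|hm] := eqVneq (tpos h).+1 d; have [hm'|hm'] := eqVneq (tpos h').+1 d.
- lia.
- rewrite hm modnn modn_small; lia.
- rewrite hm' modnn (modn_small (m:=(tpos h).+1)); lia.
- rewrite !modn_small; lia.
Qed.

Lemma bwalk_inj (G : tape_graph) : injective (@bwalk G).
Proof.
move=> h h' e; apply: tsucc_inj.
by rewrite -[tsucc h]tmate_invol -[tsucc h']tmate_invol; congr tmate.
Qed.

Lemma tsucc_surj (G : tape_graph) (h : tH G) : exists g, tsucc g = h.
Proof. have [g _ K] := injF_bij (@tsucc_inj G); by exists (g h). Qed.

Lemma crel_self_connect (X : quad_surface) c d :
  crel (@qglue X) c c -> connect (crel (@qglue X)) c d -> d = c.
Proof.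
move=> cc /connectP [p pp ->]; elim: p pp => //= x p IH /andP [cx pp].
have ex : x = c by move: cc cx; rewrite /crel => /andP [_ /eqP <-] /andP [_ /eqP].
by move: pp; rewrite ex; exact: IH.
Qed.

Lemma crel_nself (X : quad_surface) c : ~~ crel (@qglue X) c c.
Proof.
apply/negP => cc; have [d /andP [cd /eqP bd]] := qvertex_boundary c.
have := crel_self_connect cc cd => edc; rewrite edc in bd.
by move: cc; rewrite /crel bd eqxx.
Qed.

Lemma crel_fun (X : quad_surface) c x y :
  crel (@qglue X) c x -> crel (@qglue X) c y -> x = y.
Proof. by rewrite /crel => /andP [_ /eqP ->] /andP [_ /eqP ->]. Qed.

Lemma connect_step (T : finType) (e : rel T) c d :
  connect e c d -> c != d -> exists x, e c x /\ connect e x d.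
Proof.
move=> /connectP [[|x p] /= pp ->]; first by rewrite eqxx.
move: pp => /andP [cx pp] _; exists x; split => //.
by apply/connectP; exists p.
Qed.

Lemma dirA (G : tape_graph) (X : quad_surface) (f : tH G -> qSq X * 'I_4)
 (finj : injective f) (feven : forall h, ~~ odd (f h).2)
 (fsurj : forall c : qSq X * 'I_4, ~~ odd c.2 -> exists h, f h = c)
 (fmate : forall h, f (tmate h) = ((f h).1, opp4 (f h).2))
 (hsame : forall h h', tvert h = tvert h' <-> same_vertex (f h) (f h'))
 (hord : forall h h', tvert h = tvert h' -> (tpos h < tpos h' <-> ccw_before (f h) (f h'))) :
 forall h, exists h', fconnect (@bwalk G) h h' && is_max_at_vertex h'.
Proof.
set gl := @qglue X.
have Lstep : forall h c', crel gl (f h) c' ->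
    exists h', [/\ c' = f h', tvert h' = tvert h & tpos h < tpos h'].
  move=> h c' hc; have := hc; rewrite /crel => /andP [ne /eqP ec].
  have : ~~ odd c'.2.
    by rewrite ec (qglue_parity ne) /side_before /= odd_prev4 feven.
  move=> /fsurj [h' eh']; exists h'; rewrite -eh'.
  have tv : tvert h' = tvert h.
    apply/esym/hsame; rewrite /same_vertex eh' (connect1 hc) //.
  split => //; apply/(hord _ _ (esym tv)); rewrite /ccw_before eh' (connect1 hc) andbT.
  by apply/eqP => e; move: hc; rewrite -e (negbTE (crel_nself _)).
have Lmax : forall h c', is_max_at_vertex h -> ~~ crel gl (f h) c'.
  move=> h c' /eqP hm; apply/negP => /Lstep [h' [_ tv lt]].
  by have := tpos_lt h'; rewrite tv -hm; lia.
have Lsucc : forall h, ~~ is_max_at_vertex h -> crel gl (f h) (f (tsucc h)).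
  move=> h nm; have [tv tp] := succ_nmax nm.
  have : tpos h < tpos (tsucc h) by rewrite tp.
  move=> /(hord _ _ (esym tv)) /andP [ne cn].
  have [x [hx cx]] := connect_step cn ne.
  have [h1 [ex tv1 lt1]] := Lstep _ _ hx; rewrite ex in hx cx.
  have [e|ne1] := eqVneq (f h1) (f (tsucc h)); first by rewrite -e.
  have : tpos h1 < tpos (tsucc h) by apply/hord; [rewrite tv tv1 | rewrite /ccw_before ne1 cx].
  lia.
have Lpred : forall g x, crel gl (f g) (f x) -> x = tsucc g.
  move=> g x hx; have nm : ~~ is_max_at_vertex g.
    by apply/negP => m; move: (Lmax _ (f x) m); rewrite hx.
  exact/finj/(crel_fun hx (Lsucc _ nm)).
set neg := fun m => ((f m).1, prev4 (f m).2).
have sbneg : forall m, side_before (neg m) = f (tmate m).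
  by move=> m; rewrite fmate /side_before /= prev4_prev4.
have Lnegstep : forall m c', crel gl (neg m) c' -> exists g, c' = neg g /\ bwalk g = m.
  move=> m c'; rewrite /crel sbneg => /andP [ne /eqP ec].
  have oc : odd c'.2 by rewrite ec (qglue_parity ne) (feven _).
  have [g eg] : exists g, f g = (c'.1, next4 c'.2) by apply: fsurj; rewrite odd_next4 oc.
  have sbg : side_before (f g) = c' by rewrite eg /side_before /= prev4_next4; case: (c').
  have cr : crel gl (f g) (f (tmate m)).
    rewrite /crel sbg ec /gl qglue_invol eqxx andbT.
    by rewrite eq_sym.
  have := Lpred _ _ cr => es; exists g; split.
    by rewrite /neg eg /= prev4_next4; case: (c').
  by rewrite /bwalk -es tmate_invol.
have Lnegbound : forall m, gl (side_before (neg m)) = side_before (neg m) ->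
    exists g, is_max_at_vertex g /\ bwalk g = m.
  move=> m; rewrite sbneg => hb; have [g eg] := tsucc_surj (tmate m).
  exists g; split; last by rewrite /bwalk eg tmate_invol.
  apply/negPn/negP => nm; have := Lsucc _ nm; rewrite eg /crel => /andP [ne /eqP e].
  have e2 : side_before (f g) = f (tmate m) by rewrite -hb e /gl qglue_invol.
  by move: ne; rewrite e2 hb eqxx.
move=> h.
have [d /andP [cd /eqP bd]] := qvertex_boundary (neg h).
have key : forall p m, path (crel gl) (neg m) p -> fconnect (@bwalk G) m h ->
    exists m', last (neg m) p = neg m' /\ fconnect (@bwalk G) m' h.
  elim=> [|x p IH] m /=; first by move=> _ c; exists m.
  move=> /andP [cx pp] c; have [g [ex eb]] := Lnegstep _ _ cx.
  rewrite ex in pp *; apply: IH => //.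
  by apply: connect_trans c; apply: connect1; rewrite /= eb.
move: cd => /connectP [p pp ed].
have [m' [em c]] := key p h pp (connect0 _ _).
rewrite ed em in bd; have [g [mg eb]] := Lnegbound _ bd.
exists g; rewrite mg andbT fconnect_sym; last exact: bwalk_inj.
by apply: connect_trans c; apply: connect1; rewrite /= eb.
Qed.

Definition rep (G : tape_graph) (h : tH G) : bool := enum_rank h < enum_rank (tmate h).

Lemma rep_mate (G : tape_graph) (h : tH G) : rep (tmate h) = ~~ rep h.
Proof.
rewrite /rep tmate_invol.
have ne : (enum_rank h : nat) != enum_rank (tmate h).
  apply/eqP => e; have := tmate_fpf h; rewrite eq_sym => /eqP; apply.
  by apply: enum_rank_inj; apply: val_inj.
by move: ne; lia.
Qed.

Definition qS (G : tape_graph) : finType := {h : tH G | rep h}.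

Lemma rep_np (G : tape_graph) (h : tH G) : rep h = false -> rep (tmate h).
Proof. by rewrite rep_mate => ->. Qed.

Definition sqof (G : tape_graph) (h : tH G) : qS G :=
  (if rep h as b return (rep h = b -> qS G) then fun p => exist _ h p
   else fun np => exist _ (tmate h) (rep_np np)) (erefl (rep h)).

Lemma val_sqof (G : tape_graph) (h : tH G) : val (sqof h) = if rep h then h else tmate h.
Proof. rewrite /sqof; move: (erefl (rep h)); case: {2 3}(rep h) => e /=; by rewrite e. Qed.

Definition k0 : 'I_4 := @Ordinal 4 0 isT.
Definition k2 : 'I_4 := @Ordinal 4 2 isT.
Definition cornerof (G : tape_graph) (h : tH G) : 'I_4 := if rep h then k0 else k2.
Definition FF (G : tape_graph) (h : tH G) : qS G * 'I_4 := (sqof h, cornerof h).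
Definition pos (G : tape_graph) (x : qS G * 'I_4) : tH G :=
  if (x.2 == 0 :> nat) || (x.2 == 3 :> nat) then val x.1 else tmate (val x.1).

Lemma pos_FF (G : tape_graph) (h : tH G) : pos (FF h) = h.
Proof. by rewrite /pos /FF /cornerof /= val_sqof; case: (rep h) => //=; rewrite tmate_invol. Qed.

Lemma FF_inj (G : tape_graph) : injective (@FF G).
Proof. by move=> h h' e; rewrite -(pos_FF h) e pos_FF. Qed.

Lemma FF_even (G : tape_graph) (h : tH G) : ~~ odd (FF h).2.
Proof. by rewrite /FF /cornerof /=; case: (rep h). Qed.

Lemma FF_pos (G : tape_graph) (x : qS G * 'I_4) : ~~ odd x.2 -> FF (pos x) = x.
Proof.
case: x => s [[|[|[|[|k]]]] //= p] _; rewrite /pos /FF /cornerof /=.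
- rewrite (valP s); congr pair; last exact: val_inj.
  by apply: val_inj; rewrite val_sqof (valP s).
- rewrite rep_mate (valP s) /=; congr pair; last exact: val_inj.
  by apply: val_inj; rewrite val_sqof rep_mate (valP s) /= tmate_invol.
Qed.

Lemma bef_pos (G : tape_graph) (x : qS G * 'I_4) : odd x.2 -> side_before (FF (pos x)) = x.
Proof.
case: x => s [[|[|[|[|k]]]] //= p] _; rewrite /pos /FF /cornerof /side_before /=.
- rewrite rep_mate (valP s) /=; congr pair; last by apply: val_inj; rewrite /= /prev4 inordK.
  by apply: val_inj; rewrite val_sqof rep_mate (valP s) /= tmate_invol.
- rewrite (valP s); congr pair; last by apply: val_inj; rewrite /= /prev4 inordK.
  by apply: val_inj; rewrite val_sqof (valP s).
Qed.

Lemma pos_bef (G : tape_graph) (h : tH G) : pos (side_before (FF h)) = h.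
Proof.
rewrite /pos /FF /cornerof /side_before /= val_sqof.
by case: (rep h) => /=; rewrite /prev4 inordK //= tmate_invol.
Qed.

Lemma odd_bef (G : tape_graph) (h : tH G) : odd (side_before (FF h)).2.
Proof. by rewrite /side_before odd_prev4 FF_even. Qed.

Lemma FF_mate (G : tape_graph) (h : tH G) : FF (tmate h) = ((FF h).1, opp4 (FF h).2).
Proof.
rewrite /FF /cornerof rep_mate /=; congr pair.
  by apply: val_inj; rewrite !val_sqof rep_mate tmate_invol; case: (rep h).
by case: (rep h); apply: val_inj; rewrite /= /opp4 inordK.
Qed.

Definition glG (G : tape_graph) (x : qS G * 'I_4) : qS G * 'I_4 :=
  if ~~ odd x.2 then
    (if [pick g | (tsucc g == pos x) && ~~ is_max_at_vertex g] is Some g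
     then side_before (FF g) else x)
  else (if ~~ is_max_at_vertex (pos x) then FF (tsucc (pos x)) else x).

Lemma glG_even (G : tape_graph) (g : tH G) : ~~ is_max_at_vertex g ->
  glG (FF (tsucc g)) = side_before (FF g).
Proof.
move=> nm; rewrite /glG FF_even pos_FF.
case: pickP => [g' /andP [/eqP e _]|none]; first by rewrite (tsucc_inj e).
by have := none g; rewrite eqxx nm.
Qed.

Lemma glG_even_max (G : tape_graph) (g : tH G) : is_max_at_vertex g ->
  glG (FF (tsucc g)) = FF (tsucc g).
Proof.
move=> m; rewrite /glG FF_even pos_FF.
case: pickP => [g' /andP [/eqP e nm]|//]; by rewrite (tsucc_inj e) m in nm.
Qed.

Lemma glG_odd (G : tape_graph) (h : tH G) : ~~ is_max_at_vertex h ->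
  glG (side_before (FF h)) = FF (tsucc h).
Proof. by move=> nm; rewrite /glG odd_bef pos_bef nm. Qed.

Lemma glG_odd_max (G : tape_graph) (h : tH G) : is_max_at_vertex h ->
  glG (side_before (FF h)) = side_before (FF h).
Proof. by move=> m; rewrite /glG odd_bef pos_bef m. Qed.

Lemma side_cases (G : tape_graph) (x : qS G * 'I_4) :
  (exists h, x = FF h) \/ (exists h, x = side_before (FF h)).
Proof.
case o: (odd x.2); [right|left]; exists (pos x).
  by rewrite bef_pos.
by rewrite FF_pos ?o.
Qed.

Lemma glG_invol (G : tape_graph) (x : qS G * 'I_4) : glG (glG x) = x.
Proof.
have [[h ->]|[h ->]] := side_cases x.
  have [g eg] := tsucc_surj h; rewrite -eg.
  case m: (is_max_at_vertex g); first by rewrite !glG_even_max ?m.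
  by rewrite glG_even ?m // glG_odd ?m.
case m: (is_max_at_vertex h); first by rewrite !glG_odd_max ?m.
by rewrite glG_odd ?m // glG_even ?m.
Qed.

Lemma glG_parity (G : tape_graph) (x : qS G * 'I_4) :
  glG x != x -> odd (glG x).2 = ~~ odd x.2.
Proof.
have [[h ->]|[h ->]] := side_cases x.
  have [g eg] := tsucc_surj h; rewrite -eg.
  case m: (is_max_at_vertex g); first by rewrite !glG_even_max ?m ?eqxx.
  by rewrite glG_even ?m // odd_bef (negbTE (FF_even _)).
case m: (is_max_at_vertex h); first by rewrite !glG_odd_max ?m ?eqxx.
by rewrite glG_odd ?m // odd_bef (negbTE (FF_even _)).
Qed.

Lemma crel_FF (G : tape_graph) (h : tH G) : ~~ is_max_at_vertex h ->
  crel (@glG G) (FF h) (FF (tsucc h)).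
Proof.
move=> nm; rewrite /crel glG_odd // eqxx andbT.
by apply/eqP => e; have := odd_bef h; rewrite -e (negbTE (FF_even _)).
Qed.

Lemma crel_FF_inv (G : tape_graph) (h : tH G) c :
  crel (@glG G) (FF h) c -> ~~ is_max_at_vertex h /\ c = FF (tsucc h).
Proof.
rewrite /crel; case m: (is_max_at_vertex h); first by rewrite glG_odd_max ?m ?eqxx.
by rewrite glG_odd ?m // => /andP [_ /eqP].
Qed.

Lemma connect_FF (G : tape_graph) k (h h' : tH G) :
  tvert h = tvert h' -> tpos h' = tpos h + k -> connect (crel (@glG G)) (FF h) (FF h').
Proof.
elim: k h => [|k IH] h tv tp.
  by rewrite addn0 in tp; rewrite (tpos_inj tv (esym tp)).
have nm : ~~ is_max_at_vertex h.
  by rewrite /is_max_at_vertex; have := tpos_lt h'; rewrite -tv; lia.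
have [tv' tp'] := succ_nmax nm.
apply: connect_trans (connect1 (crel_FF nm)) _; apply: IH; first by rewrite tv'.
by rewrite tp'; lia.
Qed.

Lemma connect_FF_inv (G : tape_graph) (h : tH G) c :
  connect (crel (@glG G)) (FF h) c ->
  exists h', [/\ c = FF h', tvert h' = tvert h & tpos h <= tpos h'].
Proof.
move=> /connectP [p]; elim: p h => [|x p IH] h /=; first by move=> _ ->; exists h.
move=> /andP [cx pp] ec; have [nm ex] := crel_FF_inv cx.
have [tv tp] := succ_nmax nm; rewrite ex in pp ec.
have [h' [e1 e2 e3]] := IH _ pp ec; exists h'; split => //; first by rewrite e2.
by move: e3; rewrite tp; lia.
Qed.

Definition negc (G : tape_graph) (m : tH G) : qS G * 'I_4 := ((FF m).1, prev4 (FF m).2).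

Lemma prev4_opp4_prev4 k : prev4 (opp4 (prev4 k)) = k.
Proof. by apply: val_inj; case: k => [[|[|[|[|k]]]] //= ?]; rewrite /prev4 /opp4 !inordK. Qed.

Lemma sb_negc (G : tape_graph) (m : tH G) : side_before (negc m) = FF (tmate m).
Proof. by rewrite FF_mate /side_before /= prev4_prev4. Qed.

Lemma negc_step (G : tape_graph) (g : tH G) : ~~ is_max_at_vertex g ->
  crel (@glG G) (negc (bwalk g)) (negc g).
Proof.
move=> nm; rewrite /crel sb_negc /bwalk tmate_invol glG_even //.
have -> : side_before (FF g) = negc g by [].
rewrite eqxx andbT; apply/eqP => e.
have : odd (negc g).2 := odd_bef g.
by rewrite e (negbTE (FF_even _)).
Qed.

Lemma negc_bound (G : tape_graph) (g : tH G) : is_max_at_vertex g ->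
  glG (side_before (negc (bwalk g))) = side_before (negc (bwalk g)).
Proof. by move=> m; rewrite sb_negc /bwalk tmate_invol glG_even_max. Qed.

Lemma negc_cover (G : tape_graph) (c : qS G * 'I_4) : odd c.2 ->
  c = negc (tmate (pos (side_before c))).
Proof.
move=> oc; rewrite /negc FF_mate FF_pos; last by rewrite odd_prev4 oc.
by rewrite /side_before /= prev4_opp4_prev4; case: c {oc}.
Qed.

Lemma vbound (G : tape_graph)
  (hb : forall h : tH G, exists h', fconnect (@bwalk G) h h' && is_max_at_vertex h')
  (c : qS G * 'I_4) :
  exists c', connect (crel (@glG G)) c c' && (glG (side_before c') == side_before c').
Proof.
case oc: (odd c.2).
  rewrite (negc_cover oc); set m := tmate _.
  have [gi gK Kg] := injF_bij (@bwalk_inj G).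
  have [gm /andP [cg mg]] := hb (gi m).
  rewrite fconnect_sym in cg; last exact: bwalk_inj.
  have e := iter_findex cg; set n := findex _ _ _ in e.
  have -> : m = bwalk (iter n (@bwalk G) gm) by rewrite e Kg.
  elim: n {e} => [|n IH].
    by exists (negc (bwalk gm)); rewrite connect0 /= negc_bound // eqxx.
  set g := iter n.+1 _ _.
  case mx: (is_max_at_vertex g).
    by exists (negc (bwalk g)); rewrite connect0 /= negc_bound // eqxx.
  have [c' /andP [cc bc]] := IH; exists c'; rewrite bc andbT.
  by apply: connect_trans (connect1 (negc_step (negbT mx))) _.
have ec : c = FF (pos c) by rewrite FF_pos ?oc.
set h := pos c in ec; rewrite ec.
have d0 : 0 < tdeg (tvert h) by have := tpos_lt h; lia.
have : (tdeg (tvert h)).-1 < tdeg (tvert h) by lia.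
move=> /tpos_surj [h' [tv tp]].
have mh' : is_max_at_vertex h' by rewrite /is_max_at_vertex tp tv; lia.
exists (FF h'); rewrite glG_odd_max // eqxx andbT.
apply: (@connect_FF _ (tpos h' - tpos h)); first by rewrite tv.
by have := tpos_lt h; rewrite tp; lia.
Qed.

Definition mkX (G : tape_graph)
  (hb : forall h : tH G, exists h', fconnect (@bwalk G) h h' && is_max_at_vertex h') :
  quad_surface :=
  {| qSq := qS G; qglue := @glG G; qglue_invol := @glG_invol G;
     qglue_parity := @glG_parity G; qvertex_boundary := vbound hb |}.

Unset Implicit Arguments.

Theorem proposition4p5 (G : tape_graph) :
  is_positive_spine G <-> every_boundary_has_breakpoint G.
Proof.
split.
  case=> X [f [[finj fev fsurj fmate] [hv hsame hord]]].
  by split => //; apply: (dirA finj fev fsurj fmate hsame hord).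
case=> hv hb; exists (mkX hb); exists (@FF G); split; split => //.
- exact: FF_inj.
- exact: FF_even.
- by move=> c oc; exists (pos c); rewrite FF_pos.
- exact: FF_mate.
- move=> h h'; split.
    move=> tv; rewrite /same_vertex.
    case: (leqP (tpos h) (tpos h')) => l.
      by rewrite (@connect_FF _ (tpos h' - tpos h)) //; lia.
    by rewrite (@connect_FF _ (tpos h - tpos h') h' h) ?orbT //; lia.
  by case/orP => /connect_FF_inv [h2 [/FF_inj -> tv _]].
- move=> h h' tv; split.
    move=> lt; rewrite /ccw_before (@connect_FF _ (tpos h' - tpos h)) //; last by lia.
    rewrite andbT; apply/eqP => /FF_inj e; by rewrite e ltnn in lt.
  case/andP => ne /connect_FF_inv [h2 [/FF_inj e _ le]]; rewrite -e in le.
  have : tpos h != tpos h'.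
    by apply/eqP => /(tpos_inj tv) e'; rewrite e' eqxx in ne.
  lia.
Qed.
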